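(* Let $n\ge3$ and $2\le k\le n-1$. An oriented cycle $\overrightarrow{C_n}$ for which $\{k\}$ is a distance set is $\{k\}$-antimagic if and only if it is unidirectional.
   Context: An oriented graph is a simple graph each of whose edges is given one direction (an arc $(u,v)$ goes from $u$ to $v$). For vertices $u,v$, $d(u,v)$ is the length of a shortest directed path from $u$ to $v$ ($d(u,u)=0$, $\infty$ if no path). A distance set of an oriented graph is a nonempty set $D$ of nonnegative integers each of which is a finite distance $d(u,v)$ for some pair of vertices. $N_D(v)=\{y : d(v,y)\in D\}$; for a bijection $f:V\to\{1,\dots,|V|\}$, $\omega_D(v)=\sum_{x\in N_D(v)}f(x)$ (empty sum $0$); $f$ is $D$-antimagic if distinct vertices have distinct $D$-weights, and the graph is $D$-antimagic if such an $f$ exists. An oriented cycle $\overrightarrow{C_n}$ is an orientation of the cycle on $v_1,\dots,v_n$. It is unidirectional if (up to relabeling) its arcs are $(v_i,v_{i+1})$, $1\le i\le n-1$, and $(v_n,v_1)$. *)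

(* Defs.v *)
From mathcomp Require Import all_boot.
Set Implicit Arguments. Unset Strict Implicit. Unset Printing Implicit Defensive.

(* Oriented cycle on the vertex set 'I_n (vertex i stands for v_{i+1}).
   The underlying cycle has edges {i, i+1 mod n}; the orientation [o i]
   says whether the edge {i, i+1} is directed i -> i+1 (true) or
   i+1 -> i (false). *)
Definition cycle_arc (n : nat) (o : 'I_n -> bool) : rel 'I_n :=
  fun u v => (o u && (v == ordS u)) || (~~ o v && (u == ordS v)).

(* Directed distance in a digraph given by an arc relation [e]:
   [is_dist e u v m] holds iff d(u,v) = m, i.e. there is a directed
   walk (path in the sense of mathcomp's [path]) of length m from u to v
   and none of smaller length (a shortest walk is a path). *)
Definition walk_of_len (T : finType) (e : rel T) (u v : T) (m : nat) : Prop :=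
  exists p : seq T, [/\ path e u p, last u p = v & size p = m].

Definition is_dist (T : finType) (e : rel T) (u v : T) (m : nat) : Prop :=
  walk_of_len e u v m /\ forall j, j < m -> ~ walk_of_len e u v j.

Definition distance_set (T : finType) (e : rel T) (D : nat -> Prop) : Prop :=
  (exists m, D m) /\ forall m, D m -> exists u v, is_dist e u v m.

Definition labeling (T : finType) (f : T -> nat) : Prop :=
  injective f /\ forall x, 1 <= f x <= #|T|.

Definition D_weight (T : finType) (e : rel T) (D : nat -> Prop)
  (f : T -> nat) (v : T) (w : nat) : Prop :=
  exists N : {set T},
    (forall y, y \in N <-> exists m, D m /\ is_dist e v y m) /\
    w = \sum_(x in N) f x.

Definition D_antimagic_labeling (T : finType) (e : rel T) (D : nat -> Prop)
  (f : T -> nat) : Prop :=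
  labeling f /\
  forall u v wu wv, D_weight e D f u wu -> D_weight e D f v wv ->
    u <> v -> wu <> wv.

Definition D_antimagic (T : finType) (e : rel T) (D : nat -> Prop) : Prop :=
  exists f : T -> nat, D_antimagic_labeling e D f.

(* Unidirectional: up to relabeling of the vertices, the arcs are
   (v_i, v_{i+1}) and (v_n, v_1); i.e. isomorphic to the directed cycle. *)
Definition unidirectional (n : nat) (e : rel 'I_n) : Prop :=
  exists s : 'I_n -> 'I_n, bijective s /\
    forall u v, e u v = (s v == ordS (s u)).

(* Main.v *)
Require Import Defs.
From mathcomp Require Import all_boot.
From mathcomp Require Import zify.
Set Implicit Arguments. Unset Strict Implicit. Unset Printing Implicit Defensive.

Lemma uni_walk n (e : rel 'I_n) (s : 'I_n -> 'I_n) :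
  (forall u v, e u v = (s v == ordS (s u))) ->
  forall q u, path e u q -> val (s (last u q)) = (val (s u) + size q) %% n.
Proof.
move=> He; elim=> [|x q IH] u /=.
  by move=> _; rewrite addn0 modn_small.
rewrite He => /andP[/eqP Hx Hp]; rewrite (IH _ Hp) Hx /= modnDml addSnnS.
by [].
Qed.

Lemma uni_exists n (e : rel 'I_n) (s sinv : 'I_n -> 'I_n) :
  (forall u v, e u v = (s v == ordS (s u))) -> cancel sinv s ->
  forall m u, exists q, path e u q /\ size q = m.
Proof.
move=> He Ks; elim=> [|m IH] u; first by exists [::].
have [q [Hp Hs]] := IH u.
exists (rcons q (sinv (ordS (s (last u q))))); split.
  by rewrite rcons_path Hp He Ks eqxx.
by rewrite size_rcons Hs.
Qed.

Lemma uni_antimagic n k (e : rel 'I_n) : 0 < k < n -> unidirectional e ->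
  D_antimagic e (fun m => m = k).
Proof.
move=> /andP[k0 kn] [s [[sinv sK Ks] He]].
have n0 : 0 < n by apply: leq_trans kn.
pose g u := sinv (Ordinal (ltn_pmod (val (s u) + k) n0)).
have distP : forall u y, is_dist e u y k <-> y = g u.
  move=> u y; split.
  - move=> [[q [Hp Hl Hs]] _].
    have := uni_walk He Hp; rewrite Hl Hs => H.
    by rewrite /g -[y]sK; congr sinv; apply: val_inj.
  - move=> ->; split.
    + have [q [Hp Hs]] := uni_exists He Ks k u.
      exists q; split => //.
      apply: (can_inj sK); rewrite /g Ks; apply: val_inj => /=.
      by rewrite (uni_walk He Hp) Hs.
    + move=> j jk [q [Hp Hl Hs]].
      have := uni_walk He Hp; rewrite Hl Hs /g Ks /= => /eqP.
      rewrite eqn_modDl !modn_small //; last by apply: ltn_trans kn.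
      by move=> /eqP H; rewrite H ltnn in jk.
exists (fun x : 'I_n => (val x).+1); split.
  split; first by move=> x y /succn_inj /val_inj.
  by move=> x; rewrite card_ord /= ltn_ord.
move=> u v wu wv [Nu [HNu ->]] [Nv [HNv ->]] uv.
have N1 : forall w (N : {set 'I_n}),
   (forall y, y \in N <-> exists m, m = k /\ is_dist e w y m) -> N = [set g w].
  move=> w N HN; apply/setP=> y; rewrite in_set1; apply/idP/eqP.
    by move=> /HN [m [-> /distP]].
  by move=> ->; apply/HN; exists k; split=> //; apply/distP.
rewrite (N1 _ _ HNu) (N1 _ _ HNv) !big_set1 => /succn_inj/val_inj.
rewrite /g => /(can_inj Ks) /(congr1 val) /= /eqP.
rewrite eqn_modDr !modn_small // => /eqP H; apply: uv.
by apply: (can_inj sK); apply: val_inj.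
Qed.

Lemma modS_eq x N : x < N -> x.+1 %% N = if x.+1 == N then 0 else x.+1.
Proof.
move=> xN; case: eqP => [->|ne]; first exact: modnn.
by apply: modn_small; lia.
Qed.

Section Dead.
Variable n : nat.
Variable o : 'I_n.+1 -> bool.
Local Notation E := (cycle_arc o).

Definition V (a : nat) : 'I_n.+1 := Ordinal (ltn_pmod a (ltn0Sn n)).

Lemma VS a : ordS (V a) = V a.+1.
Proof. by apply: val_inj => /=; rewrite -addn1 modnDml addn1. Qed.

Lemma Vpred a : ord_pred (V a.+1) = V a.
Proof. by rewrite -VS ordSK. Qed.

Lemma Vn a : V (a + n.+1) = V a.
Proof. by apply: val_inj => /=; rewrite modnDr. Qed.

Lemma Vpred0 a : ord_pred (V a) = V (a + n).
Proof. by rewrite -Vn addnS Vpred. Qed.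

Lemma Vneq a d : 0 < d < n.+1 -> V a <> V (a + d).
Proof.
move=> /andP[d0 dn] /(congr1 val) /= /eqP.
rewrite -{1}[a]addn0 eqn_modDl mod0n modn_small // => /eqP H.
by rewrite -H in d0.
Qed.

Definition sink (w : 'I_n.+1) := ~~ o w && o (ord_pred w).

Lemma sink_noout w y : sink w -> E w y = false.
Proof.
move=> /andP[nw pw]; rewrite /cycle_arc (negbTE nw) /=.
apply/negbTE; apply/negP => /andP[ny /eqP Hw].
by rewrite Hw ordSK (negbTE ny) in pw.
Qed.

Definition dead (u : 'I_n.+1) := forall x, E u x -> forall y, E x y = false.

Lemma deadP u : (o u -> sink (ordS u)) -> (~~ o (ord_pred u) -> sink (ord_pred u)) ->
  dead u.
Proof.
move=> H1 H2 x; rewrite /cycle_arc => /orP[/andP[ou /eqP ->]|/andP[ox /eqP Hu]] y.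
  exact: sink_noout (H1 ou).
have Hx : x = ord_pred u by rewrite Hu ordSK.
by rewrite Hx in ox *; apply: sink_noout (H2 ox).
Qed.

Lemma sink_dead w : sink w -> dead w.
Proof. by move=> Hw x; rewrite sink_noout. Qed.

Lemma ivt (g : nat -> bool) a d : g a -> ~~ g (a + d) ->
  exists c, [/\ a <= c < a + d, g c & ~~ g c.+1].
Proof.
elim: d a => [|d IH] a ga; first by rewrite addn0 ga.
case gS: (g a.+1) => H.
  have H' : ~~ g (a.+1 + d) by rewrite addSnnS.
  have [c [/andP[c1 c2] gc ngc]] := IH a.+1 gS H'.
  by exists c; split=> //; apply/andP; split; lia.
by exists a; split => //; [apply/andP; split; lia | rewrite gS].
Qed.

Lemma two_dead : 2 <= n -> (exists i, o i) -> (exists j, ~~ o j) ->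
  exists u v, [/\ u <> v, dead u & dead v].
Proof.
move=> n2 [i oi] [j oj].
pose g a := o (V a).
have gi : g (nat_of_ord i) by rewrite /g (_ : V i = i) //; apply: val_inj; rewrite /= modn_small.
have gj : ~~ g (nat_of_ord i + ((n.+1 - nat_of_ord i) + nat_of_ord j)).
  rewrite /g (_ : V _ = j) //; apply: val_inj => /=.
  have -> : nat_of_ord i + (n.+1 - nat_of_ord i + nat_of_ord j) = nat_of_ord j + n.+1.
    have := ltn_ord i; lia.
  by rewrite modnDr modn_small.
have [c [_ gc ngc]] := ivt gi gj.
have sk1 : sink (V c.+1) by rewrite /sink Vpred; apply/andP.
case g1: (g (c + n)).
  exists (V c), (V c.+1); split.
  - have H1 : 0 < 1 < n.+1 by lia.
    by have := Vneq (a:=c) H1; rewrite addn1.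
  - by apply: deadP; [rewrite VS | rewrite Vpred0; move: g1; rewrite /g => ->].
  - exact: sink_dead.
case g2: (g c.+2).
  have g3 : ~~ g (c.+2 + (n - 2)).
    by rewrite (_ : c.+2 + (n - 2) = c + n) ?g1 //; lia.
  have [c' [/andP[c1 c2] gc' ngc']] := ivt g2 g3.
  exists (V c.+1), (V c'.+1); split.
  - rewrite (_ : c'.+1 = c.+1 + (c' - c)); last by lia.
    by apply: Vneq; lia.
  - exact: sink_dead.
  - by apply: sink_dead; rewrite /sink Vpred; apply/andP.
exists (V c.+2), (V c.+1); split.
- have H1 : 0 < 1 < n.+1 by lia.
  by have := Vneq (a:=c.+1) H1; rewrite addn1 => H3 H2; apply: H3; rewrite H2.
- by apply: deadP; [rewrite /g in g2; rewrite g2 | rewrite Vpred].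
- exact: sink_dead.
Qed.

End Dead.

Lemma dead_weight n (e : rel 'I_n) k f u : 2 <= k ->
  (forall x, e u x -> forall y, e x y = false) -> D_weight e (fun m => m = k) f u 0.
Proof.
move=> k2 Hd; exists set0; split; last by rewrite big_set0.
move=> y; rewrite in_set0; split=> // [[m [-> [[q [Hp _ Hs]] _]]]].
case: q Hp Hs => [|x [|y' q]] /=; try by move=> _ Hs; rewrite -Hs in k2.
by move=> /andP[ex /andP[exy _]]; rewrite (Hd x ex) in exy.
Qed.

Lemma rev_case n (u v : 'I_n.+1) :
  (u == ordS v) = (rev_ord v == ordS (rev_ord u)).
Proof.
have L1 := ltn_ord u; have L2 := ltn_ord v.
apply/eqP/eqP => H; apply: val_inj; move/(congr1 val): H => /=;
  rewrite !modS_eq //; try lia; repeat case: eqP; lia.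
Qed.

Theorem mainTheorem9 (n k : nat) (o : 'I_n -> bool) :
  3 <= n -> 2 <= k <= n - 1 ->
  distance_set (cycle_arc o) (fun m => m = k) ->
  (D_antimagic (cycle_arc o) (fun m => m = k) <-> unidirectional (cycle_arc o)).
Proof.
move=> n3 /andP[k2 kn] _; split; last first.
  by apply: uni_antimagic; apply/andP; split; lia.
destruct n as [|n]; first by [].
case: (boolP [forall x, o x]) => [/forallP Ho | /forallPn [j oj]] Hanti.
  exists id; split; first by exists id.
  by move=> u v; rewrite /cycle_arc !Ho /= orbF.
case: (boolP [forall x, ~~ o x]) => [/forallP Ho | /forallPn [i /negPn oi]].
  exists (@rev_ord n.+1); split; first by exists (@rev_ord _) => x; rewrite rev_ordK.
  by move=> u v; rewrite /cycle_arc !(negbTE (Ho _)) /= rev_case.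
exfalso.
have n2 : 2 <= n by lia.
have [u [v [uv du dv]]] := two_dead n2 (ex_intro _ i oi) (ex_intro _ j oj).
case: Hanti => f [_ Hf].
exact: (Hf u v 0 0 (dead_weight f k2 du) (dead_weight f k2 dv) uv).
Qed.
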